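(* Fix a real number $\rho\ge 1$. For each positive integer $m$, let $L=2m+2\rho$ and consider the instance with one sensor at location $0$ with radius $\rho$ and $m$ sensors at locations $2k-1$ ($k=1,\dots,m$) with radius $1$. Let $A_m$ be the minimum cost of a feasible order-preserving solution and $O_m$ the minimum cost of a feasible solution of this instance. Then $A_m/O_m\to\rho$ as $m\to\infty$.
   Context: Barrier coverage problem: an instance consists of a barrier length $L>0$ and $n$ sensors; sensor $i$ has a location $x_i\in\mathbb{R}$ and a radius $r_i>0$. The sensors are indexed so that $x_1\le x_2\le\cdots\le x_n$. A solution is a vector $y\in\mathbb{R}^n$; sensor $i$ at $y_i$ covers $[y_i-r_i,y_i+r_i]$. The solution is feasible if $[0,L]\subseteq\bigcup_i [y_i-r_i,y_i+r_i]$; its cost is $\sum_i|y_i-x_i|$. A set $S$ is active for $y$ if $[0,L]\subseteq\bigcup_{i\in S}[y_i-r_i,y_i+r_i]$. A solution $y$ is order-preserving if it has an active set $S$ such that for all $i,j\in S$ with $i<j$ we have $y_i<y_j$. (In the instance, the ratio of largest to smallest radius is $\rho$.) *)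

(* Defs.v *)
From Stdlib Require Import Reals Lra.
Open Scope R_scope.

(* General barrier coverage instance with n sensors indexed 0..n-1
   (paper's indices 1..n shifted by one); locations x, radii r, barrier [0,L].
   A solution is y : nat -> R (only indices < n are relevant). *)

Fixpoint rsum (n : nat) (f : nat -> R) : R :=
  match n with
  | O => 0
  | S k => rsum k f + f k
  end.

Definition cost (n : nat) (x y : nat -> R) : R :=
  rsum n (fun i => Rabs (y i - x i)).

Definition active (n : nat) (r : nat -> R) (L : R) (y : nat -> R)
    (S : nat -> Prop) : Prop :=
  (forall i, S i -> (i < n)%nat) /\
  forall p, 0 <= p <= L -> exists i, S i /\ y i - r i <= p <= y i + r i.

Definition feasible (n : nat) (r : nat -> R) (L : R) (y : nat -> R) : Prop :=
  active n r L y (fun i => (i < n)%nat).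

Definition order_preserving (n : nat) (r : nat -> R) (L : R) (y : nat -> R)
    : Prop :=
  exists S : nat -> Prop, active n r L y S /\
    forall i j, S i -> S j -> (i < j)%nat -> y i < y j.

Definition is_inf (E : R -> Prop) (c : R) : Prop :=
  (forall z, E z -> c <= z) /\ (forall b, (forall z, E z -> b <= z) -> b <= c).

Definition inst_x (i : nat) : R := if Nat.eqb i 0 then 0 else 2 * INR i - 1.
Definition inst_r (rho : R) (i : nat) : R := if Nat.eqb i 0 then rho else 1.
Definition inst_L (rho : R) (m : nat) : R := 2 * INR m + 2 * rho.

Definition is_min_op_cost (rho : R) (m : nat) (c : R) : Prop :=
  is_inf (fun z => exists y, feasible (S m) (inst_r rho) (inst_L rho m) y /\
            order_preserving (S m) (inst_r rho) (inst_L rho m) y /\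
            z = cost (S m) inst_x y) c.

Definition is_min_cost (rho : R) (m : nat) (c : R) : Prop :=
  is_inf (fun z => exists y, feasible (S m) (inst_r rho) (inst_L rho m) y /\
            z = cost (S m) inst_x y) c.

(* Main.v *)
Require Import Defs.
From Stdlib Require Import Reals Lra Lia Psatz Classical.
Open Scope R_scope.

Lemma rsum_ext n f g : (forall i, (i < n)%nat -> f i = g i) -> rsum n f = rsum n g.
Proof. induction n; simpl; intros H; [reflexivity|].
  rewrite IHn by (intros; apply H; lia). rewrite H by lia. reflexivity. Qed.

Lemma rsum_upd n f g j : (j < n)%nat -> (forall i, i <> j -> f i = g i) ->
  rsum n f = rsum n g - g j + f j.
Proof.
  induction n; intros Hj H; [lia|]. simpl.
  destruct (Nat.eq_dec j n) as [->|Hne].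
  - rewrite (rsum_ext n f g) by (intros; apply H; lia). ring.
  - rewrite IHn by (auto; lia). rewrite (H n) by auto. ring.
Qed.

Lemma rsum_le n f g : (forall i, (i<n)%nat -> f i <= g i) -> rsum n f <= rsum n g.
Proof. induction n; simpl; intros H; [lra|].
  assert (rsum n f <= rsum n g) by (apply IHn; intros; apply H; lia).
  assert (f n <= g n) by (apply H; lia). lra. Qed.

Lemma rsum_nonneg n f : (forall i, (i<n)%nat -> 0 <= f i) -> 0 <= rsum n f.
Proof. intros H. replace 0 with (rsum n (fun _ => 0)).
  apply rsum_le; auto. induction n; simpl; [reflexivity|]. rewrite IHn; [ring|].
  intros; apply H; lia. Qed.

Lemma rsum_ge_term n f j : (forall i, (i<n)%nat -> 0 <= f i) -> (j<n)%nat -> f j <= rsum n f.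
Proof. induction n; intros H Hj; [lia|]. simpl.
  destruct (Nat.eq_dec j n) as [->|Hne].
  - assert (0 <= rsum n f) by (apply rsum_nonneg; intros; apply H; lia). lra.
  - assert (f j <= rsum n f) by (apply IHn; [intros; apply H; lia| lia]).
    assert (0 <= f n) by (apply H; lia). lra. Qed.

Lemma rsum_const n c : rsum n (fun _ => c) = INR n * c.
Proof. induction n; simpl rsum; [simpl; ring|]. rewrite IHn, S_INR. ring. Qed.

Lemma rsum_S n f : rsum (S n) f = f 0%nat + rsum n (fun i => f (S i)).
Proof. induction n; [simpl; ring|].
  change (rsum (S (S n)) f) with (rsum (S n) f + f (S n)). rewrite IHn. simpl. ring. Qed.

Lemma rsum_odd m : rsum m (fun k => 2 * INR (S k) - 1) = INR m * INR m.
Proof. induction m; [simpl; ring|]. change (rsum (S m) (fun k => 2 * INR (S k) - 1)) with (rsum m (fun k => 2 * INR (S k) - 1) + (2 * INR (S m) - 1)). rewrite IHm. rewrite !S_INR. ring. Qed.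

Lemma rsum_lin n c f g : rsum n (fun i => c * f i + c * g i) = c * rsum n f + c * rsum n g.
Proof. induction n; simpl; [ring|]. rewrite IHn. ring. Qed.

Fixpoint cnt (n : nat) (a b : nat -> R) : nat :=
  match n with O => O | S k => (cnt k a b + if Rle_dec (a k) (b k) then 1 else 0)%nat end.

Lemma cnt_ext n a b a' b' : (forall i, (i<n)%nat -> a i = a' i /\ b i = b' i) ->
  cnt n a b = cnt n a' b'.
Proof. induction n; simpl; intros H; [reflexivity|].
  rewrite IHn by (intros; apply H; lia). destruct (H n) as [-> ->]; [lia|]. reflexivity. Qed.

Lemma cnt_upd n a b a' b' j : (j<n)%nat -> (forall i, i<>j -> a i = a' i /\ b i = b' i) ->
  a j <= b j -> b' j < a' j -> cnt n a b = S (cnt n a' b').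
Proof.
  induction n; intros Hj H H1 H2; [lia|]. simpl.
  destruct (Nat.eq_dec j n) as [->|Hne].
  - rewrite (cnt_ext n a b a' b') by (intros; apply H; lia).
    destruct (Rle_dec (a n) (b n)); [|lra]. destruct (Rle_dec (a' n) (b' n)); [lra|]. lia.
  - rewrite IHn by (auto; lia). destruct (H n) as [-> ->]; [auto|]. lia.
Qed.

Definition mu (G : R -> R) (a b s t : R) : R := Rmax 0 (G (Rmin b t) - G (Rmax a s)).

Lemma mu_nonneg G a b s t : 0 <= mu G a b s t.
Proof. unfold mu; apply Rmax_l. Qed.

Lemma mu_le G a b s t c : 0 <= c -> G (Rmin b t) - G (Rmax a s) <= c -> mu G a b s t <= c.
Proof. intros; unfold mu; apply Rmax_lub; auto. Qed.

Lemma cover_bound (G : R -> R) (K : R) :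
  0 < K -> (forall x y, x <= y -> G x <= G y) ->
  (forall x e, 0 < e -> G x - K * e <= G (x - e)) ->
  forall n k (a b : nat -> R) s t, (cnt n a b <= k)%nat -> s <= t ->
  (forall p, s <= p <= t -> exists i, (i < n)%nat /\ a i <= p <= b i) ->
  G t - G s <= rsum n (fun i => mu G (a i) (b i) s t).
Proof.
  intros HK Gm Gl n k. induction k as [|k IH]; intros a b s t Hc Hst Hcov.
  - exfalso. destruct (Hcov s) as [i [Hi Hab]]; [lra|].
    set (a' := fun l => if Nat.eqb l i then 1 else a l).
    set (b' := fun l => if Nat.eqb l i then 0 else b l).
    assert (cnt n a b = S (cnt n a' b')). { apply cnt_upd with i; auto.
      - intros l Hl. unfold a', b'. apply Nat.eqb_neq in Hl. rewrite Hl. auto.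
      - lra.
      - unfold a', b'; rewrite Nat.eqb_refl; lra. }
    lia.
  - destruct (Hcov t) as [j [Hj Habj]]; [lra|].
    assert (Hnn: forall i, (i<n)%nat -> 0 <= mu G (a i) (b i) s t) by (intros; apply mu_nonneg).
    destruct (Rle_dec (a j) s) as [Has|Has].
    + eapply Rle_trans; [|apply (rsum_ge_term n _ j Hnn Hj)].
      cbv beta. unfold mu. rewrite (Rmin_right (b j) t) by lra. rewrite (Rmax_right (a j) s) by lra. apply Rmax_r.
    + apply Rnot_le_lt in Has.
      set (a' := fun l => if Nat.eqb l j then 1 else a l).
      set (b' := fun l => if Nat.eqb l j then 0 else b l).
      assert (Hc': cnt n a b = S (cnt n a' b')). { apply cnt_upd with j; auto.
        - intros l Hl. unfold a', b'. apply Nat.eqb_neq in Hl. rewrite Hl. auto.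
        - lra.
        - unfold a', b'; rewrite Nat.eqb_refl; lra. }
      assert (Hsum: rsum n (fun i => mu G (a i) (b i) s t) =
        rsum n (fun i => mu G (a' i) (b' i) s t) - mu G (a' j) (b' j) s t + mu G (a j) (b j) s t).
      { apply (rsum_upd n (fun i => mu G (a i) (b i) s t) (fun i => mu G (a' i) (b' i) s t) j); auto. intros i Hi. unfold a', b'.
        apply Nat.eqb_neq in Hi; rewrite Hi; reflexivity. }
      assert (Hz: mu G (a' j) (b' j) s t = 0).
      { apply Rle_antisym; [|apply mu_nonneg]. apply mu_le; [lra|].
        unfold a', b'. rewrite Nat.eqb_refl.
        assert (G (Rmin 0 t) <= G (Rmax 1 s)); [|lra]. apply Gm.
        eapply Rle_trans; [apply Rmin_l|]. eapply Rle_trans; [|apply Rmax_l]. lra. }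
      assert (Hj2: G t - G (a j) <= mu G (a j) (b j) s t).
      { unfold mu. rewrite (Rmin_right (b j) t) by lra. rewrite (Rmax_left (a j) s) by lra. apply Rmax_r. }
      assert (Heps: forall e, 0 < e -> e < a j - s ->
        G t - G s - K * e <= rsum n (fun i => mu G (a i) (b i) s t)).
      { intros e He1 He2.
        assert (IHe := IH a' b' s (a j - e) ltac:(lia) ltac:(lra)).
        assert (Hm: rsum n (fun i => mu G (a' i) (b' i) s (a j - e)) <=
                    rsum n (fun i => mu G (a' i) (b' i) s t)).
        { apply rsum_le. intros i _. unfold mu. apply Rmax_lub; [apply Rmax_l|].
          eapply Rle_trans; [|apply Rmax_r]. apply Rplus_le_compat_r. apply Gm.
          unfold Rmin; destruct (Rle_dec (b' i) (a j - e)); destruct (Rle_dec (b' i) t); lra. }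
        assert (G (a j - e) - G s <= rsum n (fun i => mu G (a' i) (b' i) s (a j - e))).
        { apply IHe. intros p Hp. destruct (Hcov p) as [i [Hi Hp']]; [lra|].
          exists i. split; auto. unfold a', b'.
          destruct (Nat.eqb i j) eqn:E; [apply Nat.eqb_eq in E; subst; lra| auto]. }
        specialize (Gl (a j) e He1). lra. }
      set (X := rsum n (fun i => mu G (a i) (b i) s t)) in *.
      destruct (Rle_dec (G t - G s) X) as [|Hn]; auto. exfalso. apply Rnot_le_lt in Hn.
      set (e := Rmin ((a j - s)/2) ((G t - G s - X)/(2*K))).
      assert (He: 0 < e).
      { apply Rmin_glb_lt; [lra|]. apply Rdiv_lt_0_compat; lra. }
      assert (He1: e <= (a j - s)/2) by apply Rmin_l.
      assert (He2: e <= (G t - G s - X)/(2*K)) by apply Rmin_r.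
      assert (K * e <= (G t - G s - X)/2).
      { replace ((G t - G s - X)/2) with (K * ((G t - G s - X)/(2*K))) by (field; lra).
        apply Rmult_le_compat_l; lra. }
      specialize (Heps e He ltac:(lra)). lra.
Qed.

Definition cl (L t : R) : R := Rmax 0 (Rmin t L).

Lemma cl_range L t : 0 <= L -> 0 <= cl L t <= L.
Proof. intros; unfold cl, Rmax, Rmin; repeat destruct Rle_dec; lra. Qed.
Lemma cl_max L t : cl L t <= Rmax t 0.
Proof. unfold cl, Rmax, Rmin; repeat destruct Rle_dec; lra. Qed.
Lemma cl_mono L x y : 0 <= L -> x <= y -> cl L x <= cl L y.
Proof. intros; unfold cl, Rmax, Rmin; repeat destruct Rle_dec; lra. Qed.
Lemma cl_lip L x y : 0 <= L -> x <= y -> cl L y - cl L x <= y - x.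
Proof. intros; unfold cl, Rmax, Rmin; repeat destruct Rle_dec; lra. Qed.
Lemma cl_L L : 0 <= L -> cl L L = L.
Proof. intros; unfold cl, Rmax, Rmin; repeat destruct Rle_dec; lra. Qed.
Lemma cl_0 L : 0 <= L -> cl L 0 = 0.
Proof. intros; unfold cl, Rmax, Rmin; repeat destruct Rle_dec; lra. Qed.

Definition G2 (L t : R) : R := cl L t * cl L t / 2.

Lemma G2_mono L x y : 0 <= L -> x <= y -> G2 L x <= G2 L y.
Proof. intros. unfold G2. pose proof (cl_mono L x y H H0). pose proof (cl_range L x H). nra. Qed.

Lemma G2_lip L x e : 0 <= L -> 0 < e -> G2 L x - L * e <= G2 L (x - e).
Proof. intros. unfold G2. pose proof (cl_mono L (x - e) x H ltac:(lra)).
  pose proof (cl_lip L (x - e) x H ltac:(lra)).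
  pose proof (cl_range L x H). pose proof (cl_range L (x-e) H). nra. Qed.

Lemma G1_lip L x e : 0 <= L -> 0 < e -> cl L x - 1 * e <= cl L (x - e).
Proof. intros. pose proof (cl_lip L (x - e) x H ltac:(lra)). lra. Qed.

Lemma mu_G2_le L a b s t : 0 <= L -> a <= b ->
  mu (G2 L) a b s t <= (b - a) * (cl L b + cl L a) / 2.
Proof. intros HL Hab. apply mu_le.
  - pose proof (cl_range L a HL); pose proof (cl_range L b HL). nra.
  - assert (G2 L (Rmin b t) <= G2 L b) by (apply G2_mono; auto; apply Rmin_l).
    assert (G2 L a <= G2 L (Rmax a s)) by (apply G2_mono; auto; apply Rmax_l).
    assert (G2 L b - G2 L a <= (b - a) * (cl L b + cl L a) / 2); [|lra].
    unfold G2. pose proof (cl_mono L a b HL Hab). pose proof (cl_lip L a b HL Hab).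
    pose proof (cl_range L a HL); pose proof (cl_range L b HL). nra.
Qed.

Lemma mu_G1_le L a b s t : 0 <= L -> a <= b -> mu (cl L) a b s t <= b - a.
Proof. intros HL Hab. apply mu_le; [lra|].
  assert (cl L (Rmin b t) <= cl L b) by (apply cl_mono; auto; apply Rmin_l).
  assert (cl L a <= cl L (Rmax a s)) by (apply cl_mono; auto; apply Rmax_l).
  pose proof (cl_lip L a b HL Hab). lra. Qed.

Lemma mu_empty G a b s t : (forall x y, x <= y -> G x <= G y) -> b < a -> mu G a b s t = 0.
Proof. intros Gm H. apply Rle_antisym; [|apply mu_nonneg]. apply mu_le; [lra|].
  assert (G (Rmin b t) <= G (Rmax a s)); [|lra]. apply Gm.
  eapply Rle_trans; [apply Rmin_l|]. eapply Rle_trans; [|apply Rmax_l]. lra. Qed.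

Lemma inst_x_0 : inst_x 0 = 0. Proof. reflexivity. Qed.
Lemma inst_x_S k : inst_x (S k) = 2 * INR (S k) - 1. Proof. reflexivity. Qed.
Lemma inst_r_0 rho : inst_r rho 0 = rho. Proof. reflexivity. Qed.
Lemma inst_r_S rho k : inst_r rho (S k) = 1. Proof. reflexivity. Qed.

Lemma INR_S_ge1 k : 1 <= INR (S k).
Proof. rewrite S_INR. pose proof (pos_INR k). lra. Qed.

Lemma moment rho m y P : 1 <= rho -> active (S m) (inst_r rho) (inst_L rho m) y P ->
  (2 * INR m + 2 * rho) * (2 * INR m + 2 * rho) / 2 <=
  2 * rho * Rmax (y 0%nat + rho) 0 + 2 * (INR m * INR m) +
  2 * rsum m (fun k => Rabs (y (S k) - inst_x (S k))).
Proof.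
  intros Hr [HP Hcov]. set (L := inst_L rho m).
  assert (HL: 0 < L) by (unfold L, inst_L; pose proof (pos_INR m); lra).
  pose (a := fun i => y i - inst_r rho i). pose (b := fun i => y i + inst_r rho i).
  assert (H := cover_bound (G2 L) L HL (fun x y => G2_mono L x y ltac:(lra))
    (fun x e => G2_lip L x e ltac:(lra)) (S m) (cnt (S m) a b) a b 0 L (Nat.le_refl _) ltac:(lra)).
  assert (H' : G2 L L - G2 L 0 <= rsum (S m) (fun i => mu (G2 L) (a i) (b i) 0 L)).
  { apply H. intros p Hp. destruct (Hcov p Hp) as [i [Hi Hp']]. exists i. split; [|exact Hp'].
    auto. }
  clear H. rewrite rsum_S in H'. unfold G2 in H' at 1 2. rewrite cl_L, cl_0 in H' by lra.
  assert (H0: mu (G2 L) (a 0%nat) (b 0%nat) 0 L <= 2 * rho * Rmax (y 0%nat + rho) 0).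
  { unfold a, b. rewrite inst_r_0. eapply Rle_trans; [apply mu_G2_le; lra|].
    pose proof (cl_mono L (y 0%nat - rho) (y 0%nat + rho) ltac:(lra) ltac:(lra)).
    pose proof (cl_max L (y 0%nat + rho)). nra. }
  assert (H1: rsum m (fun i => mu (G2 L) (a (S i)) (b (S i)) 0 L) <=
     rsum m (fun k => 2 * (2 * INR (S k) - 1) + 2 * Rabs (y (S k) - inst_x (S k)))).
  { apply rsum_le. intros k _. unfold a, b. rewrite inst_r_S.
    eapply Rle_trans; [apply mu_G2_le; lra|].
    pose proof (cl_max L (y (S k) + 1)) as E1. pose proof (cl_max L (y (S k) - 1)) as E2.
    pose proof (INR_S_ge1 k) as E3. rewrite inst_x_S.
    pose proof (Rle_abs (y (S k) - (2 * INR (S k) - 1))) as E4.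
    pose proof (Rabs_pos (y (S k) - (2 * INR (S k) - 1))). revert E1 E2. unfold Rmax. destruct (Rle_dec (y (S k) + 1) 0); destruct (Rle_dec (y (S k) - 1) 0); intros E1 E2; lra. }
  rewrite rsum_lin, rsum_odd in H1. fold L. unfold L, inst_L in *. lra.
Qed.


Lemma zero_in rho m y P : 1 <= rho -> active (S m) (inst_r rho) (inst_L rho m) y P -> P 0%nat.
Proof.
  intros Hr [HP Hcov]. apply NNPP. intros Hn0. set (L := inst_L rho m).
  assert (HL: 0 < L) by (unfold L, inst_L; pose proof (pos_INR m); lra).
  pose (a := fun i => if Nat.eqb i 0 then 1 else y i - 1).
  pose (b := fun i => if Nat.eqb i 0 then 0 else y i + 1).
  assert (H := cover_bound (cl L) 1 ltac:(lra) (fun x y => cl_mono L x y ltac:(lra))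
    (fun x e => G1_lip L x e ltac:(lra)) (S m) (cnt (S m) a b) a b 0 L (Nat.le_refl _) ltac:(lra)).
  assert (H' : cl L L - cl L 0 <= rsum (S m) (fun i => mu (cl L) (a i) (b i) 0 L)).
  { apply H. intros p Hp. destruct (Hcov p Hp) as [i [Hi Hp']]. exists i. split; [auto|].
    destruct i as [|i]; [contradiction|]. unfold a, b. simpl Nat.eqb.
    rewrite inst_r_S in Hp'. exact Hp'. }
  clear H. rewrite rsum_S in H'. rewrite cl_L, cl_0 in H' by lra.
  rewrite mu_empty in H' by (auto using cl_mono || (intros; apply cl_mono; lra) || (unfold a, b; simpl; lra)).
  assert (H0 : rsum m (fun i => mu (cl L) (a (S i)) (b (S i)) 0 L) <= rsum m (fun _ => 2)).
  { apply rsum_le. intros k _. unfold a, b. simpl Nat.eqb.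
    eapply Rle_trans; [apply mu_G1_le; lra|]. lra. }
  rewrite rsum_const in H0. unfold L, inst_L in *. lra.
Qed.

Lemma cost_split m y : cost (S m) inst_x y =
  Rabs (y 0%nat) + rsum m (fun k => Rabs (y (S k) - inst_x (S k))).
Proof. unfold cost. rewrite rsum_S, inst_x_0. rewrite Rminus_0_r. reflexivity. Qed.

Lemma lower_feas rho m y : 1 <= rho -> feasible (S m) (inst_r rho) (inst_L rho m) y ->
  2 * INR m - rho * rho <= cost (S m) inst_x y.
Proof.
  intros Hr Hf. pose proof (moment rho m y _ Hr Hf) as H.
  rewrite cost_split. set (D := rsum m (fun k => Rabs (y (S k) - inst_x (S k)))) in *.
  assert (HD: 0 <= D) by (apply rsum_nonneg; intros; apply Rabs_pos).
  pose proof (pos_INR m) as HM. set (M := INR m) in *.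
  pose proof (Rle_abs (y 0%nat)). pose proof (Rabs_pos (y 0%nat)).
  pose proof (Rle_abs (- y 0%nat)). rewrite Rabs_Ropp in H2.
  destruct (Rle_dec (2 * M + rho) (y 0%nat)); [nra|].
  destruct (Rle_dec 0 (y 0%nat)).
  - rewrite Rmax_left in H by lra.
    assert ((rho - 1) * y 0%nat <= (rho - 1) * (2 * M + rho)) by (apply Rmult_le_compat_l; lra).
    nra.
  - assert (Rmax (y 0%nat + rho) 0 <= rho) by (apply Rmax_lub; lra). nra.
Qed.

Lemma lower_op rho m y : 1 <= rho -> order_preserving (S m) (inst_r rho) (inst_L rho m) y ->
  2 * INR m * rho - rho * rho <= cost (S m) inst_x y.
Proof.
  intros Hr [P [Hact Hord]]. pose proof (moment rho m y _ Hr Hact) as H.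
  pose proof (zero_in rho m y P Hr Hact) as H0.
  assert (Hy0: y 0%nat <= rho).
  { destruct Hact as [HP Hcov]. destruct (Hcov 0) as [i [Hi Hp]].
    { unfold inst_L; pose proof (pos_INR m); lra. }
    destruct i as [|i].
    - rewrite inst_r_0 in Hp. lra.
    - rewrite inst_r_S in Hp. assert (y 0%nat < y (S i)) by (apply Hord; auto; lia). lra. }
  rewrite cost_split. set (D := rsum m (fun k => Rabs (y (S k) - inst_x (S k)))) in *.
  pose proof (Rabs_pos (y 0%nat)).
  assert (Rmax (y 0%nat + rho) 0 <= 2 * rho) by (apply Rmax_lub; lra). nra.
Qed.

Lemma unit_cover m p : 0 <= p <= 2 * INR (S m) ->
  exists k, (k < S m)%nat /\ 2 * INR k <= p <= 2 * INR k + 2.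
Proof.
  induction m; intros Hp.
  - exists 0%nat. split; [lia|]. simpl in *. lra.
  - destruct (Rle_dec p (2 * INR (S m))).
    + destruct IHm as [k [Hk Hp']]; [lra|]. exists k. split; [lia|auto].
    + exists (S m). split; [lia|]. rewrite (S_INR (S m)) in Hp. lra.
Qed.

Definition yO (rho : R) (m : nat) (i : nat) : R :=
  match i with O => 2 * INR m + rho | S k => 2 * INR (S k) - 1 end.
Definition yA (rho : R) (i : nat) : R :=
  match i with O => rho | S k => 2 * INR (S k) - 1 + 2 * rho end.

Lemma yO_feas rho m : 1 <= rho -> (1 <= m)%nat ->
  feasible (S m) (inst_r rho) (inst_L rho m) (yO rho m).
Proof.
  intros Hr Hm. split; [auto|]. intros p Hp. unfold inst_L in Hp.
  destruct (Rle_dec (2 * INR m) p).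
  - exists 0%nat. split; [lia|]. rewrite inst_r_0. cbn [yO]. lra.
  - destruct m as [|m]; [lia|]. destruct (unit_cover m p) as [k [Hk Hp']]; [lra|].
    exists (S k). split; [lia|]. rewrite inst_r_S. cbn [yO]. rewrite S_INR. lra.
Qed.

Lemma yO_cost rho m : 1 <= rho -> cost (S m) inst_x (yO rho m) = 2 * INR m + rho.
Proof.
  intros Hr. rewrite cost_split. cbn [yO].
  rewrite (rsum_ext m _ (fun _ => 0)).
  - rewrite rsum_const. pose proof (pos_INR m). rewrite Rabs_right by lra. ring.
  - intros k _. rewrite inst_x_S. replace (2 * INR (S k) - 1 - (2 * INR (S k) - 1)) with 0 by ring.
    apply Rabs_R0.
Qed.

Lemma yA_feas rho m : 1 <= rho -> (1 <= m)%nat ->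
  feasible (S m) (inst_r rho) (inst_L rho m) (yA rho).
Proof.
  intros Hr Hm. split; [auto|]. intros p Hp. unfold inst_L in Hp.
  destruct (Rle_dec p (2 * rho)).
  - exists 0%nat. split; [lia|]. rewrite inst_r_0. cbn [yA]. lra.
  - destruct m as [|m]; [lia|]. destruct (unit_cover m (p - 2 * rho)) as [k [Hk Hp']]; [lra|].
    exists (S k). split; [lia|]. rewrite inst_r_S. cbn [yA]. rewrite S_INR. lra.
Qed.

Lemma yA_op rho m : 1 <= rho -> (1 <= m)%nat ->
  order_preserving (S m) (inst_r rho) (inst_L rho m) (yA rho).
Proof.
  intros Hr Hm. exists (fun i => (i < S m)%nat). split; [apply yA_feas; auto|].
  intros i j _ _ Hij. destruct j as [|j]; [lia|]. destruct i as [|i]; cbn [yA].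
  - pose proof (INR_S_ge1 j). lra.
  - assert (INR (S i) < INR (S j)) by (apply lt_INR; lia). lra.
Qed.

Lemma yA_cost rho m : 1 <= rho -> cost (S m) inst_x (yA rho) = rho + 2 * INR m * rho.
Proof.
  intros Hr. rewrite cost_split. cbn [yA].
  rewrite (rsum_ext m _ (fun _ => 2 * rho)).
  - rewrite rsum_const. rewrite Rabs_right by lra. ring.
  - intros k _. rewrite inst_x_S. replace (2 * INR (S k) - 1 + 2 * rho - (2 * INR (S k) - 1)) with (2 * rho) by ring.
    apply Rabs_right; lra.
Qed.

Lemma nat_big X : exists N : nat, X < INR N.
Proof.
  destruct (Rle_dec X 0).
  - exists 1%nat. simpl. lra.
  - destruct (archimed_cor1 (/ (X + 1))) as [N [HN HN0]].
    { apply Rinv_0_lt_compat; lra. }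
    exists N. assert (0 < INR N) by (apply lt_0_INR; lia).
    destruct (Rle_dec (INR N) X); [|lra]. exfalso.
    assert (/ (X + 1) <= / INR N) by (apply Rinv_le_contravar; lra). lra.
Qed.

Theorem lemma5 (rho : R) (A O : nat -> R) :
  1 <= rho ->
  (forall m : nat, (1 <= m)%nat -> is_min_op_cost rho m (A m)) ->
  (forall m : nat, (1 <= m)%nat -> is_min_cost rho m (O m)) ->
  Un_cv (fun m => A m / O m) rho.
Proof.
  intros Hr HA HO eps Heps.
  set (K := rho + rho * rho * rho + 2 * rho * rho).
  assert (HK: 0 < K) by (unfold K; nra).
  destruct (nat_big (K / eps + rho * rho + 1)) as [N HN].
  exists N. intros n Hn. unfold R_dist.
  assert (HNn: INR N <= INR n) by (apply le_INR; lia).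
  assert (HKe: K / eps * eps = K) by (field; lra).
  assert (Hn1: (1 <= n)%nat).
  { destruct n; [|lia]. simpl in HNn. pose proof (Rdiv_lt_0_compat K eps HK Heps). nra. }
  destruct (HA n Hn1) as [HA1 HA2]. destruct (HO n Hn1) as [HO1 HO2].
  assert (A1: A n <= rho + 2 * INR n * rho).
  { rewrite <- (yA_cost rho n Hr). apply HA1. exists (yA rho).
    split; [apply yA_feas; auto|]. split; [apply yA_op; auto|reflexivity]. }
  assert (A2: 2 * INR n * rho - rho * rho <= A n).
  { apply HA2. intros z [y [_ [Hop ->]]]. apply lower_op; auto. }
  assert (O1: O n <= 2 * INR n + rho).
  { rewrite <- (yO_cost rho n Hr). apply HO1. exists (yO rho n).
    split; [apply yO_feas; auto|reflexivity]. }
  assert (O2: 2 * INR n - rho * rho <= O n).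
  { apply HO2. intros z [y [Hf ->]]. apply lower_feas; auto. }
  set (M := INR n) in *.
  assert (HKp: 0 < K / eps) by (apply Rdiv_lt_0_compat; lra).
  assert (HOM: M <= O n) by lra.
  assert (HOpos: 0 < O n) by nra.
  set (q := A n / O n).
  assert (Hq: A n = q * O n) by (unfold q; field; lra).
  assert (HepsO: K < eps * O n).
  { assert (K / eps * eps < O n * eps) by (apply Rmult_lt_compat_r; nra). lra. }
  apply Rabs_def1.
  - destruct (Rle_dec eps (q - rho)); [|lra]. exfalso.
    assert (eps * O n <= (q - rho) * O n) by (apply Rmult_le_compat_r; lra).
    assert (rho * (2 * M - rho * rho) <= rho * O n) by (apply Rmult_le_compat_l; lra).
    assert ((q - rho) * O n = A n - rho * O n) by (rewrite Hq; ring).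
    assert (0 < rho * rho) by nra. unfold K in HepsO. lra.
  - destruct (Rle_dec eps (rho - q)); [|lra]. exfalso.
    assert (eps * O n <= (rho - q) * O n) by (apply Rmult_le_compat_r; lra).
    assert (rho * O n <= rho * (2 * M + rho)) by (apply Rmult_le_compat_l; lra).
    assert ((rho - q) * O n = rho * O n - A n) by (rewrite Hq; ring).
    assert (0 <= rho * rho * rho) by (apply Rmult_le_pos; nra).
    unfold K in HepsO. lra.
Qed.
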